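(* Suppose Assumption A2 holds. Then for any $\boldsymbol{\alpha}\in\mathcal{A}$, $\Phi(\cdot\,;\boldsymbol{\alpha})$ is $\mu_\Phi$-strongly concave on $\mathcal{X}$, where $\mu_\Phi:=\frac{\epsilon+\mu M_{\min}}{2}$ and $M_{\min}=\min_{r=1,\dots,n} M_r$, with $M_r$ the number of links that user $r$ exclusively occupies (links in $\mathcal{L}_r$ used by no other user).
   Context: Network: $n$ users, a finite set of links $\mathcal{L}$; user $r$ uses the set of links $\mathcal{L}_r\subseteq\mathcal{L}$. For each user $r$, a true utility $\widetilde U_r:\mathbb{R}_{>0}\to\mathbb{R}$ and a surrogate utility $U_r(x;\alpha_r)$ ($x>0$, $\alpha_r\in\mathbb{R}$), twice continuously differentiable. Each link $l$ has a twice continuously differentiable $B_l:\mathbb{R}\to\mathbb{R}$. Fix $\epsilon>0$; $\mathcal{A}=\mathcal{A}_1\times\dots\times\mathcal{A}_n$, each $\mathcal{A}_r\subset\mathbb{R}$ closed, convex, bounded. Define $\Phi(\mathbf{x};\boldsymbol{\alpha}) = \sum_{r=1}^n (U_r(x_r;\alpha_r) -\frac{\epsilon x_r^2}{2})-\sum_{l\in\mathcal{L}}B_l(\sum_{i:l\in\mathcal{L}_i}x_i)$. Given constants $0<\delta<b$, let $\mathcal{X}=\{\mathbf{x}:\delta/2<x_r<2b,\ r=1,\dots,n\}$. Assumption A2: for all $\boldsymbol{\alpha}\in\mathcal{A}$, $\mathbf{x}\in\mathcal{X}$: $U_r(\cdot;\alpha_r)$ is concave and each $B_l$ is $\mu$-strongly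 convex; $\widetilde U_r$, $\nabla\widetilde U_r$, $\nabla_xU_r$, $\nabla_\alpha\nabla_xU_r$, $\nabla_x^2U_r$ are $L_u$-Lipschitz; $\nabla B_l$ and $\nabla^2 B_l$ are $L_b$-Lipschitz. *)

(* Defs.v *)
From Stdlib Require Import Reals Lra List Bool.
From Coquelicot Require Import Coquelicot.
Import ListNotations.
Open Scope R_scope.
Open Scope bool_scope.

Fixpoint sumR (k : nat) (f : nat -> R) : R :=
  match k with
  | O => 0
  | S k' => sumR k' f + f k'
  end.

Definition convex_set (S : R -> Prop) : Prop :=
  forall y z t, S y -> S z -> 0 <= t <= 1 -> S (t * y + (1 - t) * z).

Definition bounded_set (S : R -> Prop) : Prop :=
  exists M, forall y, S y -> Rabs y <= M.

Definition concave_on (S : R -> Prop) (f : R -> R) : Prop :=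
  forall y z t, S y -> S z -> 0 <= t <= 1 ->
    t * f y + (1 - t) * f z <= f (t * y + (1 - t) * z).

Definition strongly_convex_on (mu : R) (S : R -> Prop) (f : R -> R) : Prop :=
  forall y z t, S y -> S z -> 0 <= t <= 1 ->
    f (t * y + (1 - t) * z)
      <= t * f y + (1 - t) * f z - mu / 2 * t * (1 - t) * (y - z) ^ 2.

Definition lipschitz_on (L : R) (S : R -> Prop) (f : R -> R) : Prop :=
  forall y z, S y -> S z -> Rabs (f y - f z) <= L * Rabs (y - z).

Definition C2_on (D : R -> Prop) (f : R -> R) : Prop :=
  forall y, D y ->
    ex_derive f y /\ ex_derive (Derive f) y /\
    continuous f y /\ continuous (Derive f) y /\ continuous (Derive_n f 2) y.

Definition dx (f : R -> R -> R) : R -> R -> R := fun x a => Derive (fun y => f y a) x.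
Definition da (f : R -> R -> R) : R -> R -> R := fun x a => Derive (fun b => f x b) a.
Definition jcont (g : R -> R -> R) (x a : R) : Prop :=
  continuous (fun p : R * R => g (fst p) (snd p)) (x, a).

Definition C2_xa_on (D : R -> Prop) (f : R -> R -> R) : Prop :=
  forall x a, D x ->
    ex_derive (fun y => f y a) x /\ ex_derive (fun b => f x b) a /\
    ex_derive (fun y => dx f y a) x /\ ex_derive (fun b => dx f x b) a /\
    ex_derive (fun y => da f y a) x /\ ex_derive (fun b => da f x b) a /\
    jcont f x a /\ jcont (dx f) x a /\ jcont (da f) x a /\
    jcont (dx (dx f)) x a /\ jcont (da (dx f)) x a /\
    jcont (dx (da f)) x a /\ jcont (da (da f)) x a.

(* Users are 0..n-1, links are 0..m-1; [uses i l] means link l ∈ L_i. *)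

Definition load (n : nat) (uses : nat -> nat -> bool) (l : nat) (x : nat -> R) : R :=
  sumR n (fun i => if uses i l then x i else 0).

Definition Phi (n m : nat) (uses : nat -> nat -> bool)
  (U : nat -> R -> R -> R) (B : nat -> R -> R) (eps : R)
  (x alpha : nat -> R) : R :=
  sumR n (fun r => U r (x r) (alpha r) - eps * (x r) ^ 2 / 2)
  - sumR m (fun l => B l (load n uses l x)).

Definition inX (n : nat) (delta b : R) (x : nat -> R) : Prop :=
  forall r, (r < n)%nat -> delta / 2 < x r < 2 * b.

Definition Mexcl (n m : nat) (uses : nat -> nat -> bool) (r : nat) : nat :=
  length (filter (fun l => uses r l &&
             forallb (fun i => Nat.eqb i r || negb (uses i l)) (seq 0 n))
          (seq 0 m)).

(* M_min = min_{r=1..n} M_r  (for n = 0 the value is irrelevant) *)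
Definition Mmin (n m : nat) (uses : nat -> nat -> bool) : nat :=
  fold_right (fun r acc => Nat.min (Mexcl n m uses r) acc)
             (Mexcl n m uses 0) (seq 0 n).

Definition sqdist (n : nat) (x y : nat -> R) : R :=
  sumR n (fun r => (x r - y r) ^ 2).

Definition strongly_concave_on_vec (n : nat) (mu : R) (S : (nat -> R) -> Prop)
  (F : (nat -> R) -> R) : Prop :=
  forall x y t, S x -> S y -> 0 <= t <= 1 ->
    t * F x + (1 - t) * F y + mu / 2 * t * (1 - t) * sqdist n x y
      <= F (fun r => t * x r + (1 - t) * y r).

(* Main.v *)
Require Import Defs.
From Stdlib Require Import Reals Lra List Lia Classical Bool.
From Coquelicot Require Import Coquelicot.
Open Scope R_scope.

Lemma sumR_ext k f g : (forall i, (i < k)%nat -> f i = g i) -> sumR k f = sumR k g.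
Proof. induction k; simpl; intros H; auto. rewrite IHk by (intros; apply H; lia). rewrite H by lia. auto. Qed.

Lemma sumR_le k f g : (forall i, (i < k)%nat -> f i <= g i) -> sumR k f <= sumR k g.
Proof. induction k; simpl; intros H; [lra|]. assert (f k <= g k) by (apply H; lia).
 assert (sumR k f <= sumR k g) by (apply IHk; intros; apply H; lia). lra. Qed.

Lemma sumR_lin k a b f g : sumR k (fun i => a * f i + b * g i) = a * sumR k f + b * sumR k g.
Proof. induction k; simpl; [ring|]. rewrite IHk. ring. Qed.

Lemma sumR_plus k f g : sumR k (fun i => f i + g i) = sumR k f + sumR k g.
Proof. induction k; simpl; [ring|]. rewrite IHk. ring. Qed.

Lemma sumR_0 k f : (forall i, (i < k)%nat -> f i = 0) -> sumR k f = 0.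
Proof. induction k; simpl; intros H; auto. rewrite IHk by (intros; apply H; lia). rewrite H by lia. ring. Qed.

Lemma sumR_single k f r0 : (r0 < k)%nat -> (forall i, (i < k)%nat -> i <> r0 -> f i = 0) -> sumR k f = f r0.
Proof. induction k; simpl; intros Hr H; [lia|].
 destruct (Nat.eq_dec r0 k) as [->|Hne].
 - rewrite sumR_0. ring. intros; apply H; lia.
 - rewrite IHk by (try lia; intros; apply H; lia). rewrite (H k) by lia. ring. Qed.

Lemma sumR_swap m n (f : nat -> nat -> R) :
  sumR m (fun l => sumR n (fun r => f r l)) = sumR n (fun r => sumR m (fun l => f r l)).
Proof. induction m; simpl. rewrite sumR_0; auto. rewrite IHm. rewrite sumR_plus. auto. Qed.

Lemma sumR_count m (p : nat -> bool) c :
  sumR m (fun l => if p l then c else 0) = c * INR (length (filter p (seq 0 m))).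
Proof. induction m; [simpl; ring|]. cbn [sumR]. rewrite List.seq_S, filter_app, length_app, plus_INR, IHm.
 simpl. destruct (p m); simpl; ring. Qed.

Lemma sumR_nonneg k f : (forall i, (i < k)%nat -> 0 <= f i) -> 0 <= sumR k f.
Proof. intros H. rewrite <- (sumR_0 k (fun _ => 0)) by auto. apply sumR_le. auto. Qed.

Lemma fold_min_le (g : nat -> nat) r l a : In r l ->
  (fold_right (fun r acc => Nat.min (g r) acc) a l <= g r)%nat.
Proof. induction l; simpl; [tauto|]. intros [->|H]; [lia|]. specialize (IHl H). lia. Qed.

Lemma Mmin_le n m uses r : (r < n)%nat -> (Mmin n m uses <= Mexcl n m uses r)%nat.
Proof. intros. unfold Mmin. apply (fold_min_le (Mexcl n m uses)). apply in_seq. lia. Qed.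

Definition ex n (uses : nat -> nat -> bool) r l := uses r l && forallb (fun i => Nat.eqb i r || negb (uses i l)) (seq 0 n).

Lemma load_lin n uses l x y t : load n uses l (fun r => t * x r + (1 - t) * y r) =
  t * load n uses l x + (1 - t) * load n uses l y.
Proof. unfold load. rewrite <- sumR_lin. apply sumR_ext. intros. destruct (uses i l); ring. Qed.

Lemma load_diff n uses l x y : load n uses l x - load n uses l y =
  sumR n (fun i => if uses i l then x i - y i else 0).
Proof. unfold load. replace (sumR n (fun i => if uses i l then x i else 0) - sumR n (fun i => if uses i l then y i else 0))
  with (1 * sumR n (fun i => if uses i l then x i else 0) + (-1) * sumR n (fun i => if uses i l then y i else 0)) by ring.
 rewrite <- sumR_lin. apply sumR_ext. intros. destruct (uses i l); ring. Qed.

Lemma claim1 n uses l (d : nat -> R) :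
  sumR n (fun r => if ex n uses r l then d r ^ 2 else 0) <=
  (sumR n (fun i => if uses i l then d i else 0)) ^ 2.
Proof.
 destruct (classic (exists r0, (r0 < n)%nat /\ ex n uses r0 l = true)) as [[r0 [Hr0 He]]|Hn].
 - assert (He' := He). unfold ex in He'. apply andb_prop in He' as [Hu Hf].
   rewrite forallb_forall in Hf.
   assert (Hz : forall i, (i < n)%nat -> i <> r0 -> uses i l = false).
   { intros i Hi Hne. specialize (Hf i (proj2 (in_seq _ _ _) (conj (Nat.le_0_l _) Hi))).
     apply orb_prop in Hf as [H|H]. apply Nat.eqb_eq in H; lia. destruct (uses i l); simpl in *; congruence. }
   rewrite (sumR_single _ _ r0 Hr0). rewrite (sumR_single _ _ r0 Hr0).
   rewrite He, Hu. lra.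
   intros i Hi Hne; rewrite Hz; auto.
   intros i Hi Hne. unfold ex; rewrite Hz; auto.
 - rewrite sumR_0. apply pow2_ge_0. intros i Hi. destruct (ex n uses i l) eqn:E; auto. exfalso; eauto.
Qed.

Lemma sumR_scal k c f : sumR k (fun i => c * f i) = c * sumR k f.
Proof. induction k; simpl; [ring|]. rewrite IHk; ring. Qed.

Lemma claimC n m uses (x y : nat -> R) :
  INR (Mmin n m uses) * sqdist n x y <=
  sumR m (fun l => (load n uses l x - load n uses l y) ^ 2).
Proof.
  apply Rle_trans with (sumR m (fun l => sumR n (fun r => if ex n uses r l then (x r - y r) ^ 2 else 0))).
  2: { apply sumR_le. intros l Hl. rewrite load_diff. apply claim1. }
  rewrite sumR_swap.
  unfold sqdist. rewrite <- sumR_scal. apply sumR_le. intros r Hr.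
  rewrite sumR_count.
  change (length (filter (fun l => ex n uses r l) (seq 0 m))) with (Mexcl n m uses r).
  rewrite Rmult_comm. apply Rmult_le_compat_l. apply pow2_ge_0.
  apply le_INR. apply Mmin_le. auto.
Qed.

Theorem proposition2
  (n m : nat) (uses : nat -> nat -> bool)
  (Ut : nat -> R -> R) (U : nat -> R -> R -> R) (B : nat -> R -> R)
  (eps mu Lu Lb delta b : R) (A : nat -> R -> Prop)
  (Heps : 0 < eps) (Hmu : 0 < mu) (Hdelta : 0 < delta) (Hdb : delta < b)
  (* regularity (standing assumptions) *)
  (HUt_C2 : forall r, (r < n)%nat -> C2_on (fun y => 0 < y) (Ut r))
  (HU_C2 : forall r, (r < n)%nat -> C2_xa_on (fun y => 0 < y) (U r))
  (HB_C2 : forall l, (l < m)%nat -> C2_on (fun _ => True) (B l))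
  (* the parameter sets A_r: closed, convex, bounded *)
  (HA : forall r, (r < n)%nat ->
          closed (A r) /\ convex_set (A r) /\ bounded_set (A r))
  (* Assumption A2 *)
  (HA2_Uconc : forall r ar, (r < n)%nat -> A r ar ->
       concave_on (fun y => delta / 2 < y < 2 * b) (fun y => U r y ar))
  (HA2_Bsc : forall l, (l < m)%nat ->
       strongly_convex_on mu
         (fun s => exists x, inX n delta b x /\ s = load n uses l x) (B l))
  (HA2_Ut : forall r, (r < n)%nat ->
       lipschitz_on Lu (fun y => delta / 2 < y < 2 * b) (Ut r) /\
       lipschitz_on Lu (fun y => delta / 2 < y < 2 * b) (Derive (Ut r)))
  (HA2_U : forall r ar, (r < n)%nat -> A r ar ->
       lipschitz_on Lu (fun y => delta / 2 < y < 2 * b) (fun y => dx (U r) y ar) /\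
       lipschitz_on Lu (fun y => delta / 2 < y < 2 * b) (fun y => da (dx (U r)) y ar) /\
       lipschitz_on Lu (fun y => delta / 2 < y < 2 * b) (fun y => dx (dx (U r)) y ar))
  (HA2_B : forall l, (l < m)%nat ->
       lipschitz_on Lb (fun s => exists x, inX n delta b x /\ s = load n uses l x)
         (Derive (B l)) /\
       lipschitz_on Lb (fun s => exists x, inX n delta b x /\ s = load n uses l x)
         (Derive_n (B l) 2)) :
  forall alpha : nat -> R, (forall r, (r < n)%nat -> A r (alpha r)) ->
    strongly_concave_on_vec n ((eps + mu * INR (Mmin n m uses)) / 2)
      (inX n delta b) (fun x => Phi n m uses U B eps x alpha).
Proof.
  intros alpha Halpha x y t Hx Hy Ht. unfold Phi.
  set (Sx := sumR n (fun r => U r (x r) (alpha r) - eps * x r ^ 2 / 2)).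
  set (Sy := sumR n (fun r => U r (y r) (alpha r) - eps * y r ^ 2 / 2)).
  set (Hxs := sumR m (fun l => B l (load n uses l x))).
  set (Hys := sumR m (fun l => B l (load n uses l y))).
  set (sq := sqdist n x y).
  set (Q := sumR m (fun l => (load n uses l x - load n uses l y) ^ 2)).
  set (M := INR (Mmin n m uses)).
  assert (HS : t * Sx + (1 - t) * Sy + (eps / 2 * t * (1 - t)) * sq <=
     sumR n (fun r => U r (t * x r + (1 - t) * y r) (alpha r) - eps * (t * x r + (1 - t) * y r) ^ 2 / 2)).
  { unfold Sx, Sy, sq, sqdist.
    match goal with |- ?L <= _ => replace L with (sumR n (fun r =>
      (t * (U r (x r) (alpha r) - eps * x r ^ 2 / 2) + (1 - t) * (U r (y r) (alpha r) - eps * y r ^ 2 / 2))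
      + (eps / 2 * t * (1 - t)) * (x r - y r) ^ 2)) by (rewrite sumR_plus, sumR_lin, sumR_scal; reflexivity) end.
    apply sumR_le. intros r Hr.
    pose proof (HA2_Uconc r (alpha r) Hr (Halpha r Hr) (x r) (y r) t (Hx r Hr) (Hy r Hr) Ht) as Hc.
    simpl in Hc.
    assert (eps * (t * x r + (1 - t) * y r) ^ 2 / 2 = t * (eps * x r ^ 2 / 2) + (1 - t) * (eps * y r ^ 2 / 2)
       - eps / 2 * t * (1 - t) * (x r - y r) ^ 2) by field.
    lra. }
  assert (HB : sumR m (fun l => B l (load n uses l (fun r => t * x r + (1 - t) * y r))) <=
     t * Hxs + (1 - t) * Hys - (mu / 2 * t * (1 - t)) * Q).
  { unfold Hxs, Hys, Q.
    replace (t * sumR m (fun l => B l (load n uses l x)) + (1 - t) * sumR m (fun l => B l (load n uses l y))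
      - mu / 2 * t * (1 - t) * sumR m (fun l => (load n uses l x - load n uses l y) ^ 2))
    with (t * sumR m (fun l => B l (load n uses l x)) + (1 - t) * sumR m (fun l => B l (load n uses l y))
      + (- (mu / 2 * t * (1 - t))) * sumR m (fun l => (load n uses l x - load n uses l y) ^ 2)) by ring.
    match goal with |- _ <= ?L => replace L with (sumR m (fun l =>
      (t * B l (load n uses l x) + (1 - t) * B l (load n uses l y))
      + (- (mu / 2 * t * (1 - t))) * (load n uses l x - load n uses l y) ^ 2)) by (rewrite sumR_plus, sumR_lin, sumR_scal; reflexivity) end.
    apply sumR_le. intros l Hl. rewrite load_lin.
    pose proof (HA2_Bsc l Hl (load n uses l x) (load n uses l y) t
      (ex_intro _ x (conj Hx eq_refl)) (ex_intro _ y (conj Hy eq_refl)) Ht) as Hc.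
    lra. }
  assert (HC : M * sq <= Q) by apply claimC.
  assert (Hsq : 0 <= sq) by (apply sumR_nonneg; intros; apply pow2_ge_0).
  assert (HM : 0 <= M) by apply pos_INR.
  assert (Htt : 0 <= t * (1 - t)) by nra.
  assert (H1 : t * (1 - t) * (M * sq) <= t * (1 - t) * Q) by (apply Rmult_le_compat_l; auto).
  assert (H2 : 0 <= t * (1 - t) * sq) by (apply Rmult_le_pos; auto).
  assert (H3 : 0 <= t * (1 - t) * (M * sq)) by (apply Rmult_le_pos; auto; apply Rmult_le_pos; auto).
  assert (H4 : 0 <= mu * (t * (1 - t) * (M * sq))) by (apply Rmult_le_pos; lra).
  assert (H5 : mu * (t * (1 - t) * (M * sq)) <= mu * (t * (1 - t) * Q)) by (apply Rmult_le_compat_l; lra).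
  assert (H6 : 0 <= eps * (t * (1 - t) * sq)) by (apply Rmult_le_pos; lra).
  assert (E : (eps + mu * M) / 2 / 2 * t * (1 - t) * sq =
     (eps * (t * (1 - t) * sq)) / 4 + (mu * (t * (1 - t) * (M * sq))) / 4) by field.
  rewrite E.
  assert (E2 : eps / 2 * t * (1 - t) * sq = (eps * (t * (1 - t) * sq)) / 2) by field.
  assert (E3 : mu / 2 * t * (1 - t) * Q = (mu * (t * (1 - t) * Q)) / 2) by field.
  rewrite E2 in HS. rewrite E3 in HB.
  lra.
Qed.
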